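(* Let $A$ be an $n\times n$ matrix with non-negative real entries and $\|A\|_{\max}\le 1$. Then every eigenvalue $\lambda$ of $A$ satisfies $\mathrm{Re}(\lambda) \ge -n/2$.
   Context: $\|A\|_{\max}$ denotes the largest absolute value of an entry of $A$. *)

(* Defs.v *)
(* Real entries: an arbitrary real closed field R;
   complex eigenvalues live in R[i] (mathcomp-real-closed complex). *)
From HB Require Import structures.
From mathcomp Require Import all_boot all_order all_algebra.
From mathcomp Require Export complex.
Set Implicit Arguments. Unset Strict Implicit. Unset Printing Implicit Defensive.
Import Order.TTheory GRing.Theory Num.Theory.
Local Open Scope ring_scope.

Definition max_norm (R : realDomainType) (m n : nat) (A : 'M[R]_(m, n)) : R :=
  \big[Num.max/0]_(i < m) \big[Num.max/0]_(j < n) `|A i j|.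

(* Main.v *)
Require Import Defs.
From HB Require Import structures.
From mathcomp Require Import all_boot all_order all_algebra.
From mathcomp Require Import complex ring lra.
Import Order.TTheory GRing.Theory Num.Theory.
Local Open Scope ring_scope.
Lemma ReD (R : rcfType) (a b : R[i]) : complex.Re (a + b) = complex.Re a + complex.Re b.
Proof. by case: a; case: b. Qed.
Lemma ImD (R : rcfType) (a b : R[i]) : complex.Im (a + b) = complex.Im a + complex.Im b.
Proof. by case: a; case: b. Qed.
Lemma Re_sum (R : rcfType) (m : nat) (F : 'I_m -> R[i]) : complex.Re (\sum_i F i) = \sum_i complex.Re (F i).
Proof. by apply: (big_morph _ (@ReD R)). Qed.
Lemma Im_sum (R : rcfType) (m : nat) (F : 'I_m -> R[i]) : complex.Im (\sum_i F i) = \sum_i complex.Im (F i).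
Proof. by apply: (big_morph _ (@ImD R)). Qed.
Lemma le_bigmax_seq (R : realDomainType) (T : eqType) (s : seq T) (F : T -> R) x :
  x \in s -> F x <= \big[Num.max/0]_(i <- s) F i.
Proof.
elim: s => // a s IH; rewrite inE big_cons le_max => /orP [/eqP->|/IH->]; last by rewrite orbT.
by rewrite lexx.
Qed.
Lemma entry_le1 (R : realDomainType) (n : nat) (A : 'M[R]_n) i j : max_norm A <= 1 -> `|A i j| <= 1.
Proof.
move=> H; apply: (le_trans _ H). rewrite /max_norm.
have := (le_bigmax_seq _ _ _ (fun i => \big[Num.max/0]_(j < n) `|A i j|) _ (mem_index_enum i)).
move/(le_trans _); apply.
exact: (le_bigmax_seq _ _ _ (fun j => `|A i j|) _ (mem_index_enum j)).
Qed.
Lemma pt (R : realFieldType) (a u w : R) : 0 <= a -> a <= 1 -> u*w/2 - (u^+2+w^+2)/4 <= a*(u*w).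
Proof.
move=> h0 h1; case: (lerP 0 (u*w)) => h.
- have : 0 <= (u - w)^+2 by apply: sqr_ge0. have : 0 <= a * (u*w) by apply: mulr_ge0. nra.
- have : 0 <= (u + w)^+2 by apply: sqr_ge0. have : (1 - a) * (u * w) <= 0 by apply: mulr_ge0_le0; lra. nra.
Qed.
Lemma sq_sum (R : comRingType) (n : nat) (f : 'I_n -> R) :
  (\sum_i f i)^+2 = \sum_j \sum_i f i * f j.
Proof. rewrite expr2 mulr_suml; apply: eq_bigr => j _; by rewrite mulrC mulr_suml. Qed.
Lemma key (R : realFieldType) (n : nat) (a : 'I_n -> 'I_n -> R) (x y : 'I_n -> R) :
  (forall i j, 0 <= a i j) -> (forall i j, a i j <= 1) ->
  - (n%:R / 2) * \sum_j (x j ^+ 2 + y j ^+ 2) <= \sum_j \sum_i a i j * (x i * x j + y i * y j).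
Proof.
move=> h0 h1.
pose T i j := (x i * x j + y i * y j)/2 - (x i ^+2 + y i ^+ 2)/4 - (x j ^+2 + y j ^+ 2)/4.
have step : \sum_j \sum_i T i j <= \sum_j \sum_i a i j * (x i * x j + y i * y j).
  apply: ler_sum => j _; apply: ler_sum => i _.
  have := @pt _ _ (x i) (x j) (h0 i j) (h1 i j); have := @pt _ _ (y i) (y j) (h0 i j) (h1 i j).
  rewrite /T; lra.
apply: le_trans step.
set S := \sum_j (x j ^+ 2 + y j ^+ 2).
have E : \sum_j \sum_i T i j = ((\sum_i x i)^+2 + (\sum_i y i)^+2)/2 - n%:R / 2 * S.
  rewrite /T.
  under eq_bigr => j _ do rewrite !sumrB sumr_const card_ord -!mulr_suml.
  rewrite !sumrB sumr_const card_ord -!mulr_suml -/S.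
  rewrite sumrMnl -mulr_suml -/S.
  under eq_bigr => j _ do rewrite big_split /=.
  rewrite big_split /= -!sq_sum -[S / 4 *+ n]mulr_natr.
  by field.
rewrite E; have : 0 <= ((\sum_i x i)^+2 + (\sum_i y i)^+2) by apply: addr_ge0; apply: sqr_ge0.
lra.
Qed.

Lemma ReM (R : rcfType) (a b : R[i]) : complex.Re (a * b) = complex.Re a * complex.Re b - complex.Im a * complex.Im b.
Proof. by case: a; case: b. Qed.
Lemma ImM (R : rcfType) (a b : R[i]) : complex.Im (a * b) = complex.Re a * complex.Im b + complex.Im a * complex.Re b.
Proof. by case: a => a1 a2; case: b => b1 b2 /=; rewrite addrC. Qed.

Theorem lemma6 (R : rcfType) (n : nat) (A : 'M[R]_n) :
  (forall i j, 0 <= A i j) ->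
  max_norm A <= 1 ->
  forall lambda : R[i],
    eigenvalue (map_mx (real_complex R) A) lambda ->
    - (n%:R / 2 : R) <= complex.Re lambda.
Proof.
move=> h0 hmax lambda /eigenvalueP [v Hv vn0].
pose x j := complex.Re (v 0 j); pose y j := complex.Im (v 0 j).
pose p := complex.Re lambda; pose q := complex.Im lambda.
have h1 : forall i j, A i j <= 1.
  move=> i j; apply: (le_trans _ (entry_le1 _ _ A i j hmax)); exact: ler_norm.
have HRe : forall j, \sum_i x i * A i j = p * x j - q * y j.
  move=> j; have := congr1 (fun M : 'M[R[i]]_(1,n) => complex.Re (M 0 j)) Hv => /=.
  rewrite !mxE Re_sum ReM => <-; apply: eq_bigr => i _.
  by rewrite mxE ReM /= mulr0 subr0.
have HIm : forall j, \sum_i y i * A i j = p * y j + q * x j.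
  move=> j; have := congr1 (fun M : 'M[R[i]]_(1,n) => complex.Im (M 0 j)) Hv => /=.
  rewrite !mxE Im_sum ImM => <-; apply: eq_bigr => i _.
  by rewrite mxE ImM /= mulr0 add0r.
set S := \sum_j (x j ^+ 2 + y j ^+ 2).
have HS : \sum_j \sum_i A i j * (x i * x j + y i * y j) = p * S.
  rewrite /S mulr_sumr; apply: eq_bigr => j _.
  have -> : \sum_i A i j * (x i * x j + y i * y j) = (\sum_i x i * A i j) * x j + (\sum_i y i * A i j) * y j.
    rewrite !mulr_suml -big_split /=; apply: eq_bigr => i _; ring.
  rewrite HRe HIm; ring.
have Spos : 0 < S.
  rewrite lt_def sumr_ge0 ?andbT; last by move=> j _; apply: addr_ge0; apply: sqr_ge0.
  apply/negP => /eqP /psumr_eq0P H0.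
  have {}H0 : forall j, x j ^+ 2 + y j ^+ 2 = 0.
    by move=> j; apply: H0 => // k _; apply: addr_ge0; apply: sqr_ge0.
  case/negP: vn0; apply/eqP/matrixP => i j; rewrite mxE (ord1 i).
  have := H0 j; have := sqr_ge0 (x j); have := sqr_ge0 (y j) => hy hx.
  move=> /eqP; rewrite paddr_eq0 // => /andP [/eqP hx0 /eqP hy0].
  move: hx0 hy0; rewrite /x /y; case: (v 0 j) => a b /= /eqP; rewrite sqrf_eq0 => /eqP -> /eqP; rewrite sqrf_eq0 => /eqP ->.
  by [].
have := @key _ _ _ x y h0 h1; rewrite HS.
by rewrite (ler_pM2r Spos).
Qed.
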